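(* Let $f\ge1$ and $k\ge 3$ be integers and consider the asynchronous Bullshark protocol with $n=kf+1$ validators as described in the context. If a validator $p_i$ directly commits a steady-state leader in wave $w$, then no honest validator commits (directly or indirectly) a fallback leader in wave $w$; and symmetrically, if a validator $p_i$ directly commits a fallback leader in wave $w$, then no honest validator commits (directly or indirectly) a steady-state leader in wave $w$.
   Context: Setting: $n=kf+1$ validators, at most $f$ Byzantine. All local DAGs are subsets of one common set of vertices; each vertex has a round and a source validator, and for each validator and round there is at most one vertex (no equivocation). Each validator $p_i$ keeps a local DAG $DAG_i$ closed under edges; $DAG_i[r]$ is its set of round-$r$ vertices; a path is a sequence of contiguous edges. Waves have 4 rounds, $\mathit{round}(w,j)=4(w-1)+j$. Each wave $w$ has a first steady-state leader vertex in $\mathit{round}(w,1)$, a second steady-state leader vertex in $\mathit{round}(w,3)$ (both predetermined) and a fallback leader vertex in $\mathit{round}(w,1)$ (selected by a shared coin at the end of the wave). Voting types: for each wave $w$, each validator $p_j$ whose $\mathit{round}(w,1)$ vertex exists has a voting type in $w$, either steady-state or fallback, which is a deterministic function of that vertex and its causal history; hence every validator that has $p_j$'s $\mathit{round}(w,1)$ vertex in its DAG assigns $p_j$ the same type for $w$, and all of $p_j$'s vertices in wave $w$ carry that type. A vertex votes for a leader if it has a path to it; steady-state leaders of rounds $\mathit{round}(w,1)$ and $\mathit{round}(w,3)$ are voted on by vertices of rounds $\mathit{round}(w,2)$ and $\mathit{round}(w,4)$ respectively, and the fallback leader by vertices of $\mathit{round}(w,4)$. Direct commit: $p_i$ directly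 commits a leader of wave $w$ if at least $(k-1)f+1$ vertices of the corresponding voting round in $DAG_i$ have a path to it and have the leader's type (steady-state for steady-state leaders, fallback for the fallback leader). Indirect commit: when traversing back from a directly committed vertex, a validator computes, for a candidate leader, the votes as the vertices of its voting round that are reachable from the committed vertex and have a path to the candidate; it commits a leader only if that leader has at least $(k-2)f+1$ votes of its own type while the leader of the other type has at most $f$ votes of that other type. *)

(* Defs.v *)
From HB Require Import structures.
From mathcomp Require Import all_boot.
Set Implicit Arguments. Unset Strict Implicit. Unset Printing Implicit Defensive.

Inductive vtyp := Steady | Fallback.
Definition vtyp_eqb (a b : vtyp) : bool :=
  match a, b with Steady, Steady | Fallback, Fallback => true | _, _ => false end.
Lemma vtyp_eqP : Equality.axiom vtyp_eqb.
Proof. by case; case; constructor. Qed.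
HB.instance Definition _ := hasDecEq.Build vtyp vtyp_eqP.

(* round(w,j) = 4(w-1)+j, waves numbered from 1. *)
Definition round_of (w j : nat) : nat := 4 * (w - 1) + j.

(* The three leader roles of a wave: first steady-state leader (round(w,1)),
   second steady-state leader (round(w,3)), fallback leader (round(w,1)). *)
Inductive role := SS1 | SS2 | FB.

Definition is_steady_role (r : role) : bool :=
  match r with FB => false | _ => true end.

Definition leader_round (w : nat) (r : role) : nat :=
  match r with SS2 => round_of w 3 | _ => round_of w 1 end.

Definition vote_round (w : nat) (r : role) : nat :=
  match r with SS1 => round_of w 2 | _ => round_of w 4 end.

Definition role_type (r : role) : vtyp :=
  match r with FB => Fallback | _ => Steady end.

Definition leader_src (n : nat) (L1 L2 F : nat -> 'I_n) (w : nat) (r : role) : 'I_n :=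
  match r with SS1 => L1 w | SS2 => L2 w | FB => F w end.

Definition is_leader_vertex (V : finType) (n : nat) (rnd : V -> nat) (src : V -> 'I_n)
  (L1 L2 F : nat -> 'I_n) (w : nat) (r : role) (v : V) : bool :=
  (rnd v == leader_round w r) && (src v == leader_src L1 L2 F w r).

Definition direct_votes (V : finType) (rnd : V -> nat) (edge : rel V) (vtype : V -> vtyp)
  (D : {set V}) (w : nat) (r : role) (v : V) : {set V} :=
  [set u in D | [&& rnd u == vote_round w r, connect edge u v & vtype u == role_type r]].

Definition direct_commits_vertex (V : finType) (n f k : nat) (rnd : V -> nat)
  (src : V -> 'I_n) (edge : rel V) (vtype : V -> vtyp) (DAG : 'I_n -> {set V})
  (L1 L2 F : nat -> 'I_n) (i : 'I_n) (w : nat) (r : role) (v : V) : Prop :=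
  [/\ v \in DAG i, is_leader_vertex rnd src L1 L2 F w r v &
      (k - 1) * f + 1 <= #|direct_votes rnd edge vtype (DAG i) w r v|].

Definition direct_commit (V : finType) (n f k : nat) (rnd : V -> nat)
  (src : V -> 'I_n) (edge : rel V) (vtype : V -> vtyp) (DAG : 'I_n -> {set V})
  (L1 L2 F : nat -> 'I_n) (i : 'I_n) (w : nat) (r : role) : Prop :=
  exists v, direct_commits_vertex f k rnd src edge vtype DAG L1 L2 F i w r v.

Definition indirect_votes (V : finType) (rnd : V -> nat) (edge : rel V) (vtype : V -> vtyp)
  (c : V) (w : nat) (r : role) (v : V) : {set V} :=
  [set u | [&& rnd u == vote_round w r, connect edge c u, connect edge u v
              & vtype u == role_type r]].

(* Indirect commit: only the necessary vote condition of the rule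
   (at least (k-2)f+1 votes of the leader's own type counted from a directly
   committed vertex) is required. *)
Definition indirect_commit (V : finType) (n f k : nat) (rnd : V -> nat)
  (src : V -> 'I_n) (edge : rel V) (vtype : V -> vtyp) (DAG : 'I_n -> {set V})
  (L1 L2 F : nat -> 'I_n) (j : 'I_n) (w : nat) (r : role) : Prop :=
  exists c w' r' v,
    [/\ direct_commits_vertex f k rnd src edge vtype DAG L1 L2 F j w' r' c,
        is_leader_vertex rnd src L1 L2 F w r v &
        (k - 2) * f + 1 <= #|indirect_votes rnd edge vtype c w r v|].

Definition commits (V : finType) (n f k : nat) (rnd : V -> nat)
  (src : V -> 'I_n) (edge : rel V) (vtype : V -> vtyp) (DAG : 'I_n -> {set V})
  (L1 L2 F : nat -> 'I_n) (j : 'I_n) (w : nat) (r : role) : Prop :=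
  direct_commit f k rnd src edge vtype DAG L1 L2 F j w r \/
  indirect_commit f k rnd src edge vtype DAG L1 L2 F j w r.

(* Main.v *)
Require Import Defs.
From HB Require Import structures.
From mathcomp Require Import all_boot.
From mathcomp Require Import zify.

Definition Sset {V : finType} (rnd : V -> nat) (vtype : V -> vtyp) (w : nat) (r : role) : {set V} :=
  [set u | (rnd u == vote_round w r) && (vtype u == role_type r)].

Lemma key (V : finType) (n : nat) (rnd : V -> nat) (src : V -> 'I_n) (vtype : V -> vtyp)
  (Hnoequiv : forall u v : V, rnd u = rnd v -> src u = src v -> u = v)
  (Htype : forall (w : nat) (j1 j2 : 'I_4) (u v : V),
      rnd u = round_of w j1.+1 -> rnd v = round_of w j2.+1 ->
      src u = src v -> vtype u = vtype v)
  (w : nat) (ja jb : 'I_4) (ta tb : vtyp) (A B : {set V}) :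
  ta != tb ->
  (forall u, u \in A -> rnd u = round_of w ja.+1 /\ vtype u = ta) ->
  (forall u, u \in B -> rnd u = round_of w jb.+1 /\ vtype u = tb) ->
  #|A| + #|B| <= n.
Proof.
move=> ntab HA HB.
have injA : {in A &, injective src}.
  by move=> u v /HA [ru _] /HA [rv _] e; apply: Hnoequiv => //; rewrite ru rv.
have injB : {in B &, injective src}.
  by move=> u v /HB [ru _] /HB [rv _] e; apply: Hnoequiv => //; rewrite ru rv.
rewrite -(card_in_imset injA) -(card_in_imset injB) -cardsUI.
have -> : src @: A :&: src @: B = set0.
  apply/setP => x; rewrite !inE; apply/negbTE/andP => -[/imsetP [u uA ->] /imsetP [v vB e]].
  have [ru tu] := HA u uA; have [rv tv] := HB v vB.
  have := Htype w ja jb u v ru rv e; rewrite tu tv => ab.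
  by rewrite ab eqxx in ntab.
rewrite cards0 addn0.
by apply: leq_trans (max_card _) _; rewrite card_ord.
Qed.

Lemma SsetSF (V : finType) (n : nat) (rnd : V -> nat) (src : V -> 'I_n) (vtype : V -> vtyp)
  (Hnoequiv : forall u v : V, rnd u = rnd v -> src u = src v -> u = v)
  (Htype : forall (w : nat) (j1 j2 : 'I_4) (u v : V),
      rnd u = round_of w j1.+1 -> rnd v = round_of w j2.+1 ->
      src u = src v -> vtype u = vtype v) w r :
  is_steady_role r -> #|Sset rnd vtype w r| + #|Sset rnd vtype w FB| <= n.
Proof.
move=> hr.
have HF : forall u, u \in Sset rnd vtype w FB -> rnd u = round_of w (@Ordinal 4 3 isT).+1 /\ vtype u = Fallback.
  by move=> u; rewrite inE => /andP [/eqP -> /eqP ->].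
case: r hr => // _.
- apply: (key _ _ _ _ _ Hnoequiv Htype w (@Ordinal 4 1 isT) (@Ordinal 4 3 isT) Steady Fallback _ _ isT _ HF) => //.
  by move=> u; rewrite inE => /andP [/eqP -> /eqP ->].
- apply: (key _ _ _ _ _ Hnoequiv Htype w (@Ordinal 4 3 isT) (@Ordinal 4 3 isT) Steady Fallback _ _ isT _ HF) => //.
  by move=> u; rewrite inE => /andP [/eqP -> /eqP ->].
Qed.

Lemma commits_bound (V : finType) (n f k : nat) (rnd : V -> nat)
  (src : V -> 'I_n) (edge : rel V) (vtype : V -> vtyp) (DAG : 'I_n -> {set V})
  (L1 L2 F : nat -> 'I_n) j w r :
  commits f k rnd src edge vtype DAG L1 L2 F j w r ->
  exists v, (k - 2) * f + 1 <= #|direct_votes rnd edge vtype (DAG j) w r v| \/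
     exists c, (k - 2) * f + 1 <= #|indirect_votes rnd edge vtype c w r v|.
Proof.
case=> [[v [_ _ h]]|[c [w' [r' [v [_ _ h]]]]]]; exists v; last by right; exists c.
left; apply: leq_trans h; rewrite leq_add2r leq_mul2r; apply/orP; right.
by rewrite leq_sub2l.
Qed.

Lemma dv_sub (V : finType) rnd edge vtype (D : {set V}) w r v :
  direct_votes rnd edge vtype D w r v \subset Sset rnd vtype w r.
Proof.
apply/subsetP => u; rewrite !inE => /andP [_ /and3P [-> _ ->]] //.
Qed.

Lemma iv_sub (V : finType) rnd edge vtype (c : V) w r v :
  indirect_votes rnd edge vtype c w r v \subset Sset rnd vtype w r.
Proof.
apply/subsetP => u; rewrite !inE => /and4P [-> _ _ ->] //.
Qed.

Lemma commits_S (V : finType) (n f k : nat) (rnd : V -> nat)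
  (src : V -> 'I_n) (edge : rel V) (vtype : V -> vtyp) (DAG : 'I_n -> {set V})
  (L1 L2 F : nat -> 'I_n) j w r :
  commits f k rnd src edge vtype DAG L1 L2 F j w r ->
  (k - 2) * f + 1 <= #|Sset rnd vtype w r|.
Proof.
move=> /commits_bound [v [h|[c h]]]; apply: leq_trans h _; apply: subset_leq_card.
  exact: dv_sub.
exact: iv_sub.
Qed.

Lemma direct_S (V : finType) (n f k : nat) (rnd : V -> nat)
  (src : V -> 'I_n) (edge : rel V) (vtype : V -> vtyp) (DAG : 'I_n -> {set V})
  (L1 L2 F : nat -> 'I_n) j w r :
  direct_commit f k rnd src edge vtype DAG L1 L2 F j w r ->
  (k - 1) * f + 1 <= #|Sset rnd vtype w r|.
Proof.
case=> v [_ _ h]; apply: leq_trans h _; apply: subset_leq_card; exact: dv_sub.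
Qed.

Theorem claim1 (f k : nat) (hf : 1 <= f) (hk : 3 <= k)
  (V : finType) (rnd : V -> nat) (src : V -> 'I_(k * f + 1)) (edge : rel V)
  (DAG : 'I_(k * f + 1) -> {set V}) (honest : pred 'I_(k * f + 1))
  (vtype : V -> vtyp) (L1 L2 F : nat -> 'I_(k * f + 1))
  (Hbyz : #|[set i | ~~ honest i]| <= f)
  (Hnoequiv : forall u v : V, rnd u = rnd v -> src u = src v -> u = v)
  (Hclosed : forall i u v, u \in DAG i -> edge u v -> v \in DAG i)
  (Htype : forall (w : nat) (j1 j2 : 'I_4) (u v : V),
      rnd u = round_of w j1.+1 -> rnd v = round_of w j2.+1 ->
      src u = src v -> vtype u = vtype v) :
  forall (w : nat) (i : 'I_(k * f + 1)), 1 <= w ->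
    (forall r, is_steady_role r ->
       direct_commit f k rnd src edge vtype DAG L1 L2 F i w r ->
       forall j, honest j -> ~ commits f k rnd src edge vtype DAG L1 L2 F j w FB) /\
    (direct_commit f k rnd src edge vtype DAG L1 L2 F i w FB ->
       forall j r, honest j -> is_steady_role r ->
       ~ commits f k rnd src edge vtype DAG L1 L2 F j w r).
Proof.
move=> w i _; split.
- move=> r hr /direct_S h1 j _ /commits_S h2.
  have := SsetSF _ _ _ _ _ Hnoequiv Htype w _ hr.
  move: h1 h2; set a := #|_|; set b := #|_| => h1 h2 h3; nia.
- move=> /direct_S h1 j r _ hr /commits_S h2.
  have := SsetSF _ _ _ _ _ Hnoequiv Htype w _ hr.
  move: h1 h2; set a := #|_|; set b := #|_| => h1 h2 h3; nia.
Qed.
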